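(* Let $(\hat{x}_i,\hat{a}_i,\hat{y}_i)$, $i=1,\dots,N$, be samples in $\mathbb{R}^n\times\{0,1\}\times\mathbb{R}$ with empirical distribution $\hat{\mathbb{P}}^N$ and empirical marginals $\hat{p}^N_a=\frac1N\#\{i:\hat{a}_i=a\}>0$. Let $\mathcal{R}(x)=\rho^Tx+\sigma$ with $\rho\in\mathbb{R}^n\setminus\{0\}$, $\sigma\in\mathbb{R}$, let $d(y,\hat{y})=\hat{y}$, and let $\lambda(a)=(\hat{p}^N_1)^{-1}\mathbb{1}_{a=1}-(\hat{p}^N_0)^{-1}\mathbb{1}_{a=0}$, so that $\phi(x,a,y)=\lambda(a)\mathcal{R}(x)$. Let $\alpha=1$, $\beta\ge0$, $c((x,a,y),(x',a',y'))=\|x-x'\|+\infty\cdot|a-a'|+\beta|y-y'|$ (with $\infty\cdot 0=0$), $W_c^2(\mathbb{P},\mathbb{Q})=\inf_{\pi\in\Pi(\mathbb{P},\mathbb{Q})}\mathbb{E}_\pi[c^2]$, and $$\mathcal{T}=\inf\Big\{W_c^2(\hat{\mathbb{P}}^N,\mathbb{Q}):\ \mathbb{E}_{\mathbb{Q}}[\phi(X,A,Y)]=0,\ \mathbb{Q}(A=a)=\hat{p}^N_a\ \forall a\Big\}.$$ Then $$\mathcal{T}=\frac{\big(\sum_{i=1}^N\lambda(\hat{a}_i)(\rho^T\hat{x}_i+\sigma)\big)^2}{N\|\rho\|^2\sum_{i=1}^N\lambda(\hat{a}_i)^2}.$$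
   Context: $\|\cdot\|$ is the Euclidean norm; $\Pi(\mathbb{P},\mathbb{Q})$ is the set of couplings; the infimum is over probability distributions $\mathbb{Q}$ on $\mathbb{R}^n\times\{0,1\}\times\mathbb{R}$. This is the squared Wasserstein projection onto the set of distributions under which the linear regressor satisfies the equal-mean fairness criterion $\mathbb{E}[\mathcal{R}(X)\mid A=0]=\mathbb{E}[\mathcal{R}(X)\mid A=1]$ (with empirical group weights). *)

(* Defs.v *)
From HB Require Import structures.
From mathcomp Require Import all_boot all_order all_algebra.
From mathcomp Require Import all_classical all_reals all_analysis.
Set Implicit Arguments. Unset Strict Implicit. Unset Printing Implicit Defensive.
Import Order.TTheory GRing.Theory Num.Theory.
Local Open Scope classical_set_scope.
Local Open Scope ring_scope.

Section Defs.
Context {R : realType} {n : nat}.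

(* points of R^n are n-tuples, with the product (Borel) sigma-algebra *)
Definition vec := (n.-tuple R).
(* sample space R^n x {0,1} x R ; the bool is the sensitive attribute, true = 1 *)
Definition Z := ((vec * bool) * R)%type.

Definition dotv (u v : vec) : R := \sum_(i < n) tnth u i * tnth v i.
Definition enorm (u : vec) : R := Num.sqrt (\sum_(i < n) tnth u i ^+ 2).
Definition edist (u v : vec) : R :=
  Num.sqrt (\sum_(i < n) (tnth u i - tnth v i) ^+ 2).

Definition cost (beta : R) (z z' : Z) : \bar R :=
  if z.1.2 == z'.1.2 then (edist z.1.1 z'.1.1 + beta * `|z.2 - z'.2|)%:E
  else +oo%E.

Definition empirical N (s : 'I_N -> Z) (A : set Z) : \bar R :=
  (N%:R^-1 * \sum_(i < N) (\1_A (s i) : R))%:E.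

Definition coupling N (s : 'I_N -> Z) (Q : probability Z R)
  (pi : probability (Z * Z)%type R) : Prop :=
  (forall A, measurable A -> pi (A `*` setT) = empirical s A) /\
  (forall B, measurable B -> pi (setT `*` B) = Q B).

Definition Wc2 (beta : R) N (s : 'I_N -> Z) (Q : probability Z R) : \bar R :=
  ereal_inf [set (\int[pi]_w (cost beta w.1 w.2 ^+ 2))%E
            | pi in [set pi | coupling s Q pi]].

Definition phat N (s : 'I_N -> Z) (a : bool) : R :=
  N%:R^-1 * #|[set i : 'I_N | (s i).1.2 == a]|%:R.

Definition lam N (s : 'I_N -> Z) (a : bool) : R :=
  if a then (phat s true)^-1 else - (phat s false)^-1.

Definition phi N (s : 'I_N -> Z) (rho : vec) (sigma : R) (z : Z) : R :=
  lam s z.1.2 * (dotv rho z.1.1 + sigma).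

Definition fairness_projection (beta : R) N (s : 'I_N -> Z) (rho : vec)
  (sigma : R) : \bar R :=
  ereal_inf [set Wc2 beta s Q | Q in
    [set Q : probability Z R |
      Q.-integrable setT (EFin \o phi s rho sigma) /\
      (\int[Q]_z (phi s rho sigma z)%:E = 0)%E /\
      (forall a : bool, Q [set z | z.1.2 = a] = (phat s a)%:E)]].

End Defs.

(* Main.v *)
Require Import Defs.
From HB Require Import structures.
From mathcomp Require Import all_boot all_order all_algebra.
From mathcomp Require Import all_classical all_reals all_analysis.
From mathcomp Require Import measurable_realfun.
From mathcomp Require Import ring lra.
Import Order.TTheory GRing.Theory Num.Theory.
Local Open Scope classical_set_scope.
Local Open Scope ring_scope.

Section Emp.
Context d (T : measurableType d) (R : realType).
Variables (M : nat) (w : nat -> T).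
Lemma empk_ge0 : 0 <= (M.+1%:R : R)^-1. Proof. by rewrite invr_ge0. Qed.
Definition empk : {nonneg R} := NngNum empk_ge0.
Definition emp := mscale empk (msum (fun k => @dirac _ T (w k) R) M.+1).
HB.instance Definition _ := Measure.on emp.
Lemma emp_setT : emp setT = 1%E.
Proof.
rewrite /emp /mscale /=; rewrite /msum.
rewrite (eq_bigr (fun=> 1%E)); last by move=> i _; rewrite /= diracE in_setT.
rewrite sumEFin sumr_const card_ord -EFinM mulVf // pnatr_eq0.

Qed.
HB.instance Definition _ := Measure_isProbability.Build _ _ _ emp emp_setT.

Lemma emp_ge0_integral (f : T -> \bar R) : measurable_fun setT f ->
  (forall x, (0 <= f x)%E) ->
  (\int[emp]_x f x = (M.+1%:R^-1)%:E * (\sum_(i < M.+1) f (w i))%E)%E.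
Proof.
move=> mf f0.
rewrite /emp ge0_integral_mscale //; try by move=> x _; exact: f0.
rewrite ge0_integral_measure_sum //; try by move=> x _; exact: f0.
congr (_ * _)%E; apply: eq_bigr => i _.
by rewrite integral_dirac // diracE in_setT mul1e.
Qed.

Lemma emp_integral (f : T -> R) : measurable_fun setT f ->
  emp.-integrable setT (EFin \o f) /\
  (\int[emp]_x (f x)%:E = (M.+1%:R^-1 * \sum_(i < M.+1) f (w i))%:E)%E.
Proof.
move=> mf.
have mEf : measurable_fun setT (EFin \o f) by apply/measurable_EFinP.
split.
  apply/integrableP; split => //.
  rewrite (eq_integral (fun x => (`|f x|)%:E)); last by move=> x _.
  rewrite emp_ge0_integral //; last first.
  - apply/measurable_EFinP; apply: measurableT_comp => //.
  rewrite sumEFin -EFinM; exact: ltry.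
rewrite integralE.
rewrite (@emp_ge0_integral ((EFin \o f)^\+)%E); last 2 first.
- exact: measurable_funepos.
- exact: funepos_ge0.
rewrite (@emp_ge0_integral ((EFin \o f)^\-)%E); last 2 first.
- exact: measurable_funeneg.
- exact: funeneg_ge0.
rewrite (eq_bigr (fun i : 'I_M.+1 => (Num.max (f (w i)) 0)%:E)); last first.
  by move=> i _; rewrite funeposE /= EFin_max.
rewrite [X in (_ - _ * X)%E](eq_bigr (fun i : 'I_M.+1 => (Num.max (- f (w i)) 0)%:E)); last first.
  by move=> i _; rewrite funenegE /= EFin_max.
rewrite !sumEFin -!EFinM -EFinB -mulrBr -sumrB.
congr (_ * _)%:E; apply: eq_bigr => i _.
have [h|h] := lerP 0 (f (w i)).
  by rewrite max_r ?subr0 // oppr_le0.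
by rewrite max_l ?sub0r ?opprK // oppr_ge0 ltW.
Qed.
End Emp.
Arguments emp {d T R} M w.
Arguments emp_ge0_integral {d T R} M w f.
Arguments emp_integral {d T R} M w f.


Section eq_setfun_integral.
Local Open Scope ereal_scope.
Context d (T : measurableType d) (R : realType) (D : set T).
Implicit Types m : set T -> \bar R.
Import HBNNSimple.

Let eq_setfun_integral0 m2 m1 (f : T -> \bar R) :
  (forall A, measurable A -> A `<=` D -> m1 A = m2 A) ->
  [set sintegral m1 h | h in
    [set h : {nnsfun T >-> R} | (forall x, (h x)%:E <= (f \_ D) x)]] `<=`
  [set sintegral m2 h | h in
    [set h : {nnsfun T >-> R} | (forall x, (h x)%:E <= (f \_ D) x)]].
Proof.
move=> m12 _ [h hfD <-] /=; exists h => //; apply: eq_fsbigr => r _.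
have [hrD|hrD] := pselect (h @^-1` [set r] `<=` D); first by rewrite m12.
suff : r = 0%R by move=> ->; rewrite !mul0e.
apply: contra_notP hrD => /eqP r0 t/= htr.
have := hfD t.
rewrite /patch/=; case: ifPn; first by rewrite inE.
move=> tD.
move: r0; rewrite -htr => ht0.
by rewrite le_eqVlt eqe (negbTE ht0)/= lte_fin// ltNge// fun_ge0.
Qed.

Lemma eq_setfun_integral m2 m1 (f : T -> \bar R) :
    (forall A, measurable A -> A `<=` D -> m1 A = m2 A) ->
  \int[m1]_(x in D) f x = \int[m2]_(x in D) f x.
Proof.
move=> m12; rewrite /integral funepos_restrict funeneg_restrict.
by congr (ereal_sup _ - ereal_sup _); rewrite eqEsubset; split;
  apply: eq_setfun_integral0 => A /m12 // /[apply].
Qed.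
End eq_setfun_integral.

Section misc.
Local Open Scope ereal_scope.
Context d (T : measurableType d) (R : realType).

Lemma ge0_le_integral_nm (mu : {measure set T -> \bar R}) (f g : T -> \bar R) :
  (forall x, 0 <= f x) -> (forall x, f x <= g x) ->
  \int[mu]_x f x <= \int[mu]_x g x.
Proof.
move=> f0 fg.
rewrite !ge0_integralE //; last by move=> x _; apply: le_trans (fg x).
apply: ereal_sup_le => _ [h hf <-]; exists h => //= x.
apply: le_trans (hf x) _; rewrite /patch; case: ifP => // _; exact: fg.
Qed.

Lemma int_lin (mu : {measure set T -> \bar R}) (f g : T -> R) (a b : R) :
  mu.-integrable setT (EFin \o f) -> mu.-integrable setT (EFin \o g) ->
  mu.-integrable setT (fun x => ((a * f x + b * g x)%R)%:E) /\
  \int[mu]_x ((a * f x + b * g x)%R)%:E =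
    a%:E * \int[mu]_x (f x)%:E + b%:E * \int[mu]_x (g x)%:E.
Proof.
move=> If Ig.
have Iaf := integrableZl measurableT a If.
have Ibg := integrableZl measurableT b Ig.
have Iaf' : mu.-integrable setT (EFin \o (fun x => (a * f x)%R)).
  by apply: eq_integrable measurableT _ _ _ Iaf => x _ /=; rewrite EFinM.
have Ibg' : mu.-integrable setT (EFin \o (fun x => (b * g x)%R)).
  by apply: eq_integrable measurableT _ _ _ Ibg => x _ /=; rewrite EFinM.
split.
  by apply: eq_integrable measurableT _ _ _ (integrableD measurableT Iaf' Ibg') => x _ /=.
rewrite (_ : (fun x => ((a * f x + b * g x)%R)%:E) =
   (EFin \o (fun x => (a * f x)%R)) \+ (EFin \o (fun x => (b * g x)%R))); last first.
  by apply/funext => x /=.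
rewrite (integralD_EFin measurableT Iaf' Ibg').
by rewrite -(integralZl measurableT If) -(integralZl measurableT Ig).
Qed.

End misc.

Section push.
Local Open Scope ereal_scope.
Context d1 d2 (X : measurableType d1) (Y : measurableType d2) (R : realType).
Variables (mu : {measure set X -> \bar R}) (P : {measure set Y -> \bar R}) (g : X -> Y).
Hypothesis mg : measurable_fun setT g.
Hypothesis hP : forall A, measurable A -> mu (g @^-1` A) = P A.

Lemma push_ge0 (h : Y -> \bar R) : measurable_fun setT h -> (forall y, 0 <= h y) ->
  \int[mu]_x h (g x) = \int[P]_y h y.
Proof.
move=> mh h0.
rewrite (@eq_setfun_integral _ _ _ _ (pushforward mu g) P); last first.
  by move=> A mA _; rewrite /pushforward hP.
rewrite ge0_integral_pushforward //; try by move=> y _; exact: h0.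
Qed.

Lemma push_real (f : Y -> R) : measurable_fun setT f ->
  (\int[P]_y (`|f y|)%:E < +oo) ->
  mu.-integrable setT (fun x => (f (g x))%:E) /\
  \int[mu]_x (f (g x))%:E = \int[P]_y (f y)%:E.
Proof.
move=> mf fP.
split.
  apply/integrableP; split.
    by apply/measurable_EFinP; apply: measurableT_comp.
  rewrite (@push_ge0 (fun y => (`|f y|)%:E)) //.
  by apply/measurable_EFinP; apply: measurableT_comp.
rewrite integralE [RHS]integralE; congr (_ - _).
- rewrite -(@push_ge0 ((fun y => (f y)%:E)^\+)%E); [by apply: eq_integral => x _; rewrite !funeposE| |].
  + by apply: measurable_funepos; apply/measurable_EFinP.
  + exact: funepos_ge0.
- rewrite -(@push_ge0 ((fun y => (f y)%:E)^\-)%E); [by apply: eq_integral => x _; rewrite !funenegE| |].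
  + by apply: measurable_funeneg; apply/measurable_EFinP.
  + exact: funeneg_ge0.
Qed.
End push.


Section meas.
Context (R : realType) (n : nat).
Local Notation Z := (@Z R n).

Lemma m_bool {d} {T : measurableType d} (g : bool -> T) : measurable_fun setT g.
Proof. by move=> _ Y mY. Qed.

Lemma mZ_x (i : 'I_n) : measurable_fun setT (fun z : Z => tnth z.1.1 i).
Proof.
apply: (measurableT_comp (measurable_tnth i)).
exact: (measurableT_comp measurable_fst measurable_fst).
Qed.

Lemma mZ_a : measurable_fun setT (fun z : Z => z.1.2).
Proof. exact: (measurableT_comp measurable_snd measurable_fst). Qed.

Lemma mZ_y : measurable_fun setT (fun z : Z => z.2).
Proof. exact: measurable_snd. Qed.

Lemma m_phi N (s : 'I_N -> Z) rho sigma : measurable_fun setT (phi s rho sigma).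
Proof.
rewrite /phi; apply: measurable_funM.
  exact: (measurableT_comp (m_bool (lam s)) mZ_a).
apply: measurable_funD => //; rewrite /dotv.
apply: measurable_sum => i; apply: measurable_funM => //; exact: mZ_x.
Qed.


Lemma cost2E beta (w : Z * Z) : (cost beta w.1 w.2 ^+ 2)%E =
  if w.1.1.2 == w.2.1.2 then
    ((Defs.edist w.1.1.1 w.2.1.1 + beta * `|w.1.2 - w.2.2|) ^+ 2)%:E
  else +oo%E.
Proof. by rewrite /cost; case: ifP => _; rewrite ?EFin_expe // expe2 mulyy. Qed.

Lemma m_eqa : measurable_fun setT (fun w : Z * Z => w.1.1.2 == w.2.1.2).
Proof.
rewrite (_ : (fun w : Z * Z => _) =
  (fun w : Z * Z => if w.1.1.2 then w.2.1.2 else ~~ w.2.1.2)); last first.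
  by apply/funext => -[[[x1 [] y1]] [[x2 [] y2]]].
apply: measurable_fun_ifT.
- exact: (measurableT_comp mZ_a measurable_fst).
- exact: (measurableT_comp mZ_a measurable_snd).
- exact: (measurableT_comp (m_bool negb) (measurableT_comp mZ_a measurable_snd)).
Qed.

Lemma m_edist : measurable_fun setT (fun w : Z * Z => Defs.edist w.1.1.1 w.2.1.1).
Proof.
rewrite /Defs.edist; apply: (measurableT_comp (continuous_measurable_fun (@sqrt_continuous R))).
apply: measurable_sum => i; apply: measurable_funX; apply: measurable_funB.
- exact: (measurableT_comp (mZ_x i) measurable_fst).
- exact: (measurableT_comp (mZ_x i) measurable_snd).
Qed.

Lemma m_cost2 beta : measurable_fun setT (fun w : Z * Z => (cost beta w.1 w.2 ^+ 2)%E).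
Proof.
rewrite (_ : (fun w : Z * Z => _) = (fun w : Z * Z => if w.1.1.2 == w.2.1.2 then
    ((Defs.edist w.1.1.1 w.2.1.1 + beta * `|w.1.2 - w.2.2|) ^+ 2)%:E
  else +oo%E)); last by apply/funext => w; rewrite cost2E.
apply: measurable_fun_ifT; first exact: m_eqa.
- apply/measurable_EFinP; apply: measurable_funX; apply: measurable_funD.
    exact: m_edist.
  apply: measurable_funM => //.
  have mB : measurable_fun setT (fun w : Z * Z => w.1.2 - w.2.2).
    apply: measurable_funB.
    + exact: (measurableT_comp mZ_y measurable_fst).
    + exact: (measurableT_comp mZ_y measurable_snd).
  exact: (measurableT_comp (@normr_measurable R setT) mB).
- exact: measurable_cst.
Qed.
End meas.


Section alg.
Context (R : realType) (n : nat).

Lemma aux_cs (c : R) (r v : 'I_n -> R) :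
  2 * c * (\sum_j r j * v j) - c ^+ 2 * (\sum_j r j ^+ 2) <= \sum_j v j ^+ 2.
Proof.
rewrite -subr_ge0.
have -> : \sum_j v j ^+ 2 - (2 * c * (\sum_j r j * v j) - c ^+ 2 * (\sum_j r j ^+ 2))
  = \sum_j (v j - c * r j) ^+ 2.
  rewrite !mulr_sumr -sumrB -sumrB; apply: eq_bigr => j _; ring.
by apply: sumr_ge0 => j _; exact: sqr_ge0.
Qed.

Lemma dotvB (r x y : @vec R n) :
  dotv r x - dotv r y = \sum_j tnth r j * (tnth x j - tnth y j).
Proof. by rewrite /dotv -sumrB; apply: eq_bigr => j _; rewrite mulrBr. Qed.

Lemma edist2 (x y : @vec R n) :
  Defs.edist x y ^+ 2 = \sum_j (tnth x j - tnth y j) ^+ 2.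
Proof. by rewrite /Defs.edist sqr_sqrtr // sumr_ge0 // => j _; exact: sqr_ge0. Qed.

Lemma enorm2 (x : @vec R n) : enorm x ^+ 2 = \sum_j tnth x j ^+ 2.
Proof. by rewrite /enorm sqr_sqrtr // sumr_ge0 // => j _; exact: sqr_ge0. Qed.

Lemma enorm2_gt0 (x : @vec R n) : x != [tuple 0 | _ < n] -> 0 < enorm x ^+ 2.
Proof.
move=> x0; rewrite enorm2 lt_neqAle sumr_ge0 ?andbT; last by move=> j _; exact: sqr_ge0.
apply/negP => /eqP/esym H; move/negP: x0; apply; apply/eqP/eq_from_tnth => j.
rewrite tnth_mktuple.
have := @psumr_eq0P _ _ predT (fun j => tnth x j ^+ 2) (fun j _ => sqr_ge0 _) H j isT.
by move/eqP; rewrite sqrf_eq0 => /eqP.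
Qed.

End alg.


Lemma inX1 {T1 T2 : Type} (A : set T1) (x : T1) (y : T2) :
  ((x, y) \in A `*` setT) = (x \in A).
Proof.
apply/idP/idP => [/set_mem [h _]|h]; first exact: mem_set.
by apply: mem_set; split => //; exact: set_mem h.
Qed.

Lemma inX2 {T1 T2 : Type} (B : set T2) (x : T1) (y : T2) :
  ((x, y) \in setT `*` B) = (y \in B).
Proof.
apply/idP/idP => [/set_mem [_ h]|h]; first exact: mem_set.
by apply: mem_set; split => //; exact: set_mem h.
Qed.

Section main.
Context (R : realType) (n M : nat) (s : 'I_M.+1 -> @Z R n) (rho : @vec R n)
  (sigma beta : R).
Local Notation Z := (@Z R n).
Local Notation N := M.+1.
Hypothesis p0 : 0 < phat s false.
Hypothesis p1 : 0 < phat s true.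
Hypothesis rho0 : rho != [tuple 0 | _ < n].
Hypothesis beta0 : 0 <= beta.

Let w (k : nat) : Z := s (inord k).
Let Sm := \sum_(i < N) lam s (s i).1.2 * (dotv rho (s i).1.1 + sigma).
Let L := \sum_(i < N) lam s (s i).1.2 ^+ 2.
Let K := enorm rho ^+ 2.

Lemma lam_neq0 b : lam s b != 0.
Proof.
by case: b; rewrite /lam ?oppr_eq0 invr_eq0 gt_eqF.
Qed.

Lemma K_gt0 : 0 < K.
Proof. exact: enorm2_gt0. Qed.

Lemma L_gt0 : 0 < L.
Proof.
rewrite /L lt_neqAle sumr_ge0 ?andbT; last by move=> j _; exact: sqr_ge0.
apply/negP => /eqP/esym H.
have := @psumr_eq0P _ _ predT (fun i => lam s (s i).1.2 ^+ 2) (fun j _ => sqr_ge0 _) H ord0 isT.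
by move/eqP; rewrite sqrf_eq0 (negbTE (lam_neq0 _)).
Qed.

Lemma sum_w (f : Z -> R) : \sum_(i < N) f (w i) = \sum_(i < N) f (s i).
Proof. by apply: eq_bigr => i _; rewrite /w inord_val. Qed.

Lemma sum_we (f : Z -> \bar R) : (\sum_(i < N) f (w i) = \sum_(i < N) f (s i))%E.
Proof. by apply: eq_bigr => i _; rewrite /w inord_val. Qed.

Lemma emp_set d (T : measurableType d) (v : nat -> T) (A : set T) :
  emp M v A = (N%:R^-1 * \sum_(i < N) (\1_A (v i) : R))%:E.
Proof.
rewrite /emp /mscale /= /msum.
rewrite (eq_bigr (fun i : 'I_N => (\1_A (v i) : R)%:E)); last first.
  by move=> i _; rewrite /= diracE indicE.
by rewrite sumEFin -EFinM.
Qed.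

Lemma empirical_emp A : empirical s A = emp M w A.
Proof. by rewrite emp_set /empirical sum_w. Qed.


Lemma LB (Q : probability Z R) (pi : probability (Z * Z)%type R) :
  coupling s Q pi -> Q.-integrable setT (EFin \o phi s rho sigma) ->
  (\int[Q]_z (phi s rho sigma z)%:E = 0)%E ->
  ((Sm ^+ 2 / (N%:R * K * L))%:E <= \int[pi]_x (cost beta x.1 x.2 ^+ 2))%E.
Proof.
move=> [h1 h2] IQ EQ.
have hfst : forall A, measurable A -> pi (fst @^-1` A) = emp M w A.
  by move=> A mA; rewrite -setXT h1 // empirical_emp.
have hsnd : forall B, measurable B -> pi (snd @^-1` B) = Q B.
  by move=> B mB; rewrite -setTX h2.
have P1 : forall f : Z -> R, measurable_fun setT f ->
   pi.-integrable setT (fun x => (f x.1)%:E) /\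
   (\int[pi]_x (f x.1)%:E = (N%:R^-1 * \sum_(i < N) f (s i))%:E)%E.
  move=> f mf.
  have [Ie Ee] := emp_integral M w f mf.
  have fin : (\int[emp M w]_y (`|f y|)%:E < +oo)%E.
    by move/integrableP: Ie => [_].
  have [I1 E1] := @push_real _ _ _ _ _ pi (emp M w) fst measurable_fst hfst f mf fin.
  by split => //; rewrite E1 Ee sum_w.
have mphi := @m_phi R n N s rho sigma.
have [I2 E2] : pi.-integrable setT (fun x => (phi s rho sigma x.2)%:E) /\
   (\int[pi]_x (phi s rho sigma x.2)%:E = 0)%E.
  have fin : (\int[Q]_y (`|phi s rho sigma y|)%:E < +oo)%E.
    by move/integrableP: IQ => [_].
  have [I E] := @push_real _ _ _ _ _ pi Q snd measurable_snd hsnd _ mphi fin.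
  by split => //; rewrite E EQ.
have [I1 E1] := P1 _ mphi.
have ml : measurable_fun setT (fun z : Z => lam s z.1.2 ^+ 2).
  apply: measurable_funX; exact: (measurableT_comp (m_bool (lam s)) (mZ_a R n)).
have [I3 E3] := P1 _ ml.
have [S0|S0] := eqVneq Sm 0.
  rewrite S0 expr0n /= mul0r; apply: integral_ge0 => x _; exact: sqre_ge0.
have [e [ee eS]] : exists e : R, (e = 1 \/ e = -1) /\ 0 < e * Sm.
  have [Sp|Sn] := ltP 0 Sm; first by exists 1; split; [left|rewrite mul1r].
  exists (-1); split; first by right.
  by rewrite mulN1r oppr_gt0 lt_neqAle S0.
have Kp := K_gt0; have Lp := L_gt0.
pose t := e * Sm / (K * L).
have tp : 0 < t by rewrite /t divr_gt0 // mulr_gt0.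
pose p1f := fun x : Z * Z => phi s rho sigma x.1.
pose p2f := fun x : Z * Z => phi s rho sigma x.2.
pose l1f := fun x : Z * Z => lam s x.1.1.2 ^+ 2.
pose G := fun x => (2 * t * e) * p1f x + (- (2 * t * e)) * p2f x.
pose H := fun x => 1 * G x + (- (t ^+ 2 * K)) * l1f x.
have [IG EG] := @int_lin _ _ _ pi p1f p2f (2 * t * e) (- (2 * t * e)) I1 I2.
have [IH EH] := @int_lin _ _ _ pi G l1f 1 (- (t ^+ 2 * K)) IG I3.
have mH : measurable_fun setT H.
  by apply/measurable_EFinP; exact: (measurable_int _ IH).
have Imax : pi.-integrable setT (fun x => (Num.max (H x) 0)%:E).
  apply: (le_integrable measurableT _ _ IH).
    by apply/measurable_EFinP; apply: measurable_maxr.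
  move=> x _; rewrite !abse_EFin lee_fin.
  by have [h0|h0] := lerP 0 (H x); rewrite ?normr0 ?normr_ge0.
have step1 : (\int[pi]_x (H x)%:E <= \int[pi]_x (Num.max (H x) 0)%:E)%E.
  apply: le_integral => //; move=> x _; by rewrite lee_fin le_max lexx.
have step2 : (\int[pi]_x (Num.max (H x) 0)%:E <= \int[pi]_x (cost beta x.1 x.2 ^+ 2))%E.
  apply: ge0_le_integral_nm.
    by move=> x; rewrite lee_fin le_max lexx orbT.
  move=> [z1 z2]; rewrite cost2E /=; case: eqP => ha; last by rewrite leey.
  rewrite lee_fin.
  set E := Defs.edist z1.1.1 z2.1.1.
  set B := beta * `|z1.2 - z2.2|.
  have E0 : 0 <= E by apply: sqrtr_ge0.
  have B0 : 0 <= B by rewrite mulr_ge0.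
  have key : H (z1, z2) <= E ^+ 2.
    rewrite /E edist2.
    set lm := lam s z1.1.2.
    apply: (le_trans _ (@aux_cs R n (t * e * lm) (tnth rho) (fun j => tnth z1.1.1 j - tnth z2.1.1 j))).
    rewrite -dotvB -enorm2 -/K.
    rewrite /H /G /p1f /p2f /l1f /phi /= -ha -/lm.
    by case: ee => ->; rewrite le_eqVlt; apply/orP; left; apply/eqP; ring.
  have EB : E ^+ 2 <= (E + B) ^+ 2 by nra.
  by rewrite ge_max sqr_ge0 andbT (le_trans key EB).
apply: le_trans (le_trans step1 step2).
rewrite EH EG E1 E2 E3 -/Sm -/L.
rewrite mule0 adde0 -!EFinM -EFinD lee_fin.
rewrite le_eqVlt; apply/orP; left; apply/eqP.
rewrite /t; have Kn : K != 0 by rewrite gt_eqF.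
have Ln : L != 0 by rewrite gt_eqF.
have Nn : (N%:R : R) != 0 by rewrite pnatr_eq0.
have N1 : (1 + M%:R : R) != 0 by rewrite gt_eqF //; have := ler0n R M; lra.
by case: ee => ee; rewrite ee; field; rewrite N1 Ln Kn.
Qed.

Let c0 := Sm / (K * L).
Definition shift (z : Z) : Z :=
  (([tuple tnth z.1.1 j - c0 * lam s z.1.2 * tnth rho j | j < n], z.1.2), z.2).

Lemma phi_shift z : phi s rho sigma (shift z) =
  phi s rho sigma z - c0 * (lam s z.1.2 ^+ 2 * K).
Proof.
rewrite /phi /shift /= /K enorm2.
have -> : dotv rho [tuple tnth z.1.1 j - c0 * lam s z.1.2 * tnth rho j | j < n]
   = dotv rho z.1.1 - c0 * lam s z.1.2 * \sum_j tnth rho j ^+ 2.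
  rewrite /dotv mulr_sumr -sumrB; apply: eq_bigr => j _.
  rewrite tnth_mktuple; ring.
ring.
Qed.

Lemma cost2_shift z : (cost beta z (shift z) ^+ 2)%E = ((c0 * lam s z.1.2) ^+ 2 * K)%:E.
Proof.
rewrite (@cost2E R n beta (z, shift z)) /= eqxx subrr normr0 mulr0 addr0 edist2.
congr EFin; rewrite /K enorm2 mulr_sumr; apply: eq_bigr => j _.
rewrite tnth_mktuple; ring.
Qed.

Let wq (k : nat) : Z := shift (w k).
Let wp (k : nat) : Z * Z := (w k, shift (w k)).

Lemma indic_shift (A : set Z) (b : bool) z :
  \1_[set z : Z | z.1.2 = b] (shift z) = \1_[set z : Z | z.1.2 = b] z :> R.
Proof. by []. Qed.

Lemma sum_indic_card (b : bool) :
  \sum_(i < N) (\1_[set z : Z | z.1.2 = b] (s i) : R) =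
  #|[set i : 'I_N | (s i).1.2 == b]|%:R.
Proof.
rewrite -sum1_card natr_sum [RHS]big_mkcond /=; apply: eq_bigr => i _.
have -> : (i \in in_set [set i0 | (s i0).1.2 == b]) = ((s i).1.2 == b) by rewrite unfold_in /in_set /= asboolb.
rewrite indicE; case: eqP => h.
  by rewrite mem_set.
by rewrite memNset.
Qed.

Lemma Q0_feas : let Q0 := (emp M wq : probability Z R) in
  Q0.-integrable setT (EFin \o phi s rho sigma) /\
  (\int[Q0]_z (phi s rho sigma z)%:E = 0)%E /\
  (forall a : bool, Q0 [set z | z.1.2 = a] = (phat s a)%:E).
Proof.
have mphi := @m_phi R n N s rho sigma.
have [I E] := emp_integral M wq _ mphi.
split => //; split.
  rewrite E /wq (sum_w (fun z => phi s rho sigma (shift z))).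
  under eq_bigr do rewrite phi_shift.
  rewrite sumrB -mulr_sumr -mulr_suml -/Sm -/L /c0.
  have Kn : K != 0 by rewrite gt_eqF // K_gt0.
  have Ln : L != 0 by rewrite gt_eqF // L_gt0.
  by congr EFin; rewrite [X in _ - X](_ : _ = Sm); [rewrite subrr mulr0|field; rewrite Kn Ln].
move=> a; rewrite (_ : _ [set z | z.1.2 = a] = emp M wq [set z | z.1.2 = a]) // emp_set /wq (sum_w (fun z => \1_[set z : Z | z.1.2 = a] (shift z))).
by rewrite sum_indic_card.
Qed.

Lemma pi0_coup : coupling s (emp M wq : probability Z R) (emp M wp : probability (Z * Z)%type R).
Proof.
split.
- move=> A mA.
  rewrite (_ : _ (A `*` setT) = emp M wp (A `*` setT)) // emp_set empirical_emp emp_set.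
  congr EFin; congr (_ * _); apply: eq_bigr => i _; rewrite /wp !indicE.
  by rewrite inX1.
- move=> B mB.
  rewrite (_ : _ (setT `*` B) = emp M wp (setT `*` B)) // emp_set.
  rewrite (_ : _ B = emp M wq B) // emp_set.
  congr EFin; congr (_ * _); apply: eq_bigr => i _; rewrite /wp /wq !indicE.
  by rewrite inX2.
Qed.

Lemma pi0_int : (\int[emp M wp : probability (Z * Z)%type R]_x (cost beta x.1 x.2 ^+ 2)
   = (Sm ^+ 2 / (N%:R * K * L))%:E)%E.
Proof.
rewrite emp_ge0_integral; last 2 first.
- exact: m_cost2.
- by move=> x; exact: sqre_ge0.
rewrite /wp /= (sum_we (fun z => cost beta z (shift z) ^+ 2)%E).
under eq_bigr do rewrite cost2_shift.
rewrite sumEFin -EFinM; congr EFin.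
rewrite (eq_bigr (fun i : 'I_N => c0 ^+ 2 * K * lam s (s i).1.2 ^+ 2)); last first.
  by move=> i _; ring.
rewrite -mulr_sumr -/L /c0.
have Kn : K != 0 by rewrite gt_eqF // K_gt0.
have Ln : L != 0 by rewrite gt_eqF // L_gt0.
have N1 : (1 + M%:R : R) != 0 by rewrite gt_eqF //; have := ler0n R M; lra.
by field; rewrite N1 Kn Ln.
Qed.

Lemma main_eq : fairness_projection beta s rho sigma = (Sm ^+ 2 / (N%:R * K * L))%:E.
Proof.
apply/eqP; rewrite eq_le; apply/andP; split.
- apply: ereal_inf_le; exists (Wc2 beta s (emp M wq : probability Z R)).
    by exists (emp M wq : probability Z R) => //; exact: Q0_feas.
  apply: ereal_inf_le; exists (\int[emp M wp : probability (Z * Z)%type R]_x (cost beta x.1 x.2 ^+ 2))%E.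
    by exists (emp M wp : probability (Z * Z)%type R) => //; exact: pi0_coup.
  by rewrite pi0_int.
- apply/ereal_infP => _ [Q [IQ [EQ _]] <-]; apply/ereal_infP => _ [pi cp <-].
  exact: (LB _ _ cp IQ EQ).
Qed.

End main.

Theorem corollary1 (R : realType) (n N : nat) (s : 'I_N -> @Z R n)
  (rho : @vec R n) (sigma beta : R) :
  0 < phat s false -> 0 < phat s true ->
  rho != [tuple 0 | _ < n] ->
  0 <= beta ->
  fairness_projection beta s rho sigma =
  ((\sum_(i < N) lam s (s i).1.2 * (dotv rho (s i).1.1 + sigma)) ^+ 2
   / (N%:R * enorm rho ^+ 2 * \sum_(i < N) lam s (s i).1.2 ^+ 2))%:E.
Proof.
case: N s => [|M] s hp0 hp1 hrho hb.
  by move: hp0; rewrite /phat invr0 mul0r ltxx.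
exact: main_eq.
Qed.
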